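(* Let $\mathfrak g$ be a real almost abelian Lie algebra with $\dim\mathfrak g\ge 6$. Then every LCS structure $(\omega,\theta)$ on $\mathfrak g$ is of the second kind.
   Context: An almost abelian Lie algebra is a real Lie algebra with an abelian ideal of codimension one. An LCS structure on $\mathfrak g$ is a pair $(\omega,\theta)$ with $\omega\in\Lambda^2\mathfrak g^*$ non-degenerate and $\theta\in\mathfrak g^*$ closed and nonzero, such that $d\omega=\theta\wedge\omega$. Let $\mathfrak g_\omega=\{x\in\mathfrak g:\ \omega([x,y],z)+\omega(y,[x,z])=0\ \text{for all }y,z\in\mathfrak g\}$ (a Lie subalgebra). The LCS structure is of the first kind if $\theta|_{\mathfrak g_\omega}$ is surjective onto $\mathbb R$, and of the second kind if $\theta|_{\mathfrak g_\omega}\equiv0$. *)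

(* Defs.v *)
(* real Lie algebras of dimension n modelled on 'rV[R]_n,
   R : realType (a model of the real numbers). *)
From mathcomp Require Import all_boot all_order all_algebra.
From mathcomp Require Import reals.
Set Implicit Arguments. Unset Strict Implicit. Unset Printing Implicit Defensive.
Import GRing.Theory Num.Theory.
Local Open Scope ring_scope.

Section Lie.
Variables (R : realType) (n : nat).
Notation V := 'rV[R]_n.

Definition is_lie_bracket (br : V -> V -> V) : Prop :=
  [/\ (forall (a : R) (x y z : V), br (a *: x + y) z = a *: br x z + br y z),
      (forall (a : R) (x y z : V), br z (a *: x + y) = a *: br z x + br z y),
      (forall x : V, br x x = 0) &
      (forall x y z : V, br x (br y z) + br y (br z x) + br z (br x y) = 0)].

Definition almost_abelian (br : V -> V -> V) : Prop :=
  exists U : {vspace V},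
    [/\ (\dim U).+1 = n,
        (forall x u : V, u \in U -> br x u \in U) &
        (forall u v : V, u \in U -> v \in U -> br u v = 0)].

Definition bilinear_form (w : V -> V -> R) : Prop :=
  (forall (a : R) (x y z : V), w (a *: x + y) z = a * w x z + w y z) /\
  (forall (a : R) (x y z : V), w z (a *: x + y) = a * w z x + w z y).

Definition linear_form (t : V -> R) : Prop :=
  forall (a : R) (x y : V), t (a *: x + y) = a * t x + t y.

(* Chevalley--Eilenberg differential of a 2-form and wedge with a 1-form *)
Definition d2 (br : V -> V -> V) (w : V -> V -> R) (x y z : V) : R :=
  - w (br x y) z + w (br x z) y - w (br y z) x.

Definition wedge12 (t : V -> R) (w : V -> V -> R) (x y z : V) : R :=
  t x * w y z - t y * w x z + t z * w x y.

Definition is_LCS (br : V -> V -> V) (w : V -> V -> R) (t : V -> R) : Prop :=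
  bilinear_form w /\
  (forall x : V, w x x = 0) /\
  (forall x : V, (forall y : V, w x y = 0) -> x = 0) /\
  linear_form t /\
  (forall x y : V, t (br x y) = 0) /\                           (* dθ = 0 *)
  (exists x : V, t x != 0) /\
  (forall x y z : V, d2 br w x y z = wedge12 t w x y z).       (* dω = θ∧ω *)

Definition g_omega (br : V -> V -> V) (w : V -> V -> R) (x : V) : Prop :=
  forall y z : V, w (br x y) z + w y (br x z) = 0.

Definition LCS_second_kind (br : V -> V -> V) (w : V -> V -> R) (t : V -> R) : Prop :=
  forall x : V, g_omega br w x -> t x = 0.

End Lie.

(* Main.v *)
Require Import Defs.
From HB Require Import structures.
From mathcomp Require Import all_boot all_order all_algebra.
From mathcomp Require Import reals.
Import GRing.Theory.
Local Open Scope ring_scope.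

Lemma exists_lin (R : pzRingType) (V W : lmodType R) (f : V -> W) :
  linear f -> exists g : {linear V -> W}, forall v, g v = f v.
Proof.
move=> lf.
pose g : {linear V -> W} := HB.pack_for {linear V -> W} f (GRing.isLinear.Build R V W *:%R f lf).
by exists g.
Qed.

Theorem corollary4p3 (R : realType) (n : nat) (br : 'rV[R]_n -> 'rV[R]_n -> 'rV[R]_n)
    (w : 'rV[R]_n -> 'rV[R]_n -> R) (t : 'rV[R]_n -> R) :
  (6 <= n)%N -> is_lie_bracket br -> almost_abelian br ->
  is_LCS br w t -> LCS_second_kind br w t.
Proof.
move=> n6 _ [U [dimU idU abU]] [[wl wr] [walt [wnd [tl [tbr [_ hlcs]]]]]] x gx.
apply/eqP; apply: contraT => tx0.
have wDl a b c : w (a + b) c = w a c + w b c.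
  by have := wl 1 a b c; rewrite scale1r mul1r.
have wDr a b c : w c (a + b) = w c a + w c b.
  by have := wr 1 a b c; rewrite scale1r mul1r.
have w0l z : w 0 z = 0.
  by have := wl (-1) z z z; rewrite scaleN1r addNr mulN1r addNr.
have skew a b : w a b = - w b a.
  apply/eqP; rewrite -addr_eq0.
  have := walt (a + b); rewrite wDl !wDr walt walt add0r addr0 => ->.
  by [].
have main y z : y \in U -> z \in U -> t x * w y z - t y * w x z + t z * w x y = 0.
  move=> yU zU; have := hlcs x y z; rewrite /wedge12 => <-.
  rewrite /d2 (abU _ _ yU zU) w0l subr0.
  have := gx y z; move/eqP; rewrite addr_eq0 => /eqP ->.
  by rewrite (skew (br x z)) opprK subrr.
set e0 := vpick (U^C)%VS.
have dimC : \dim (U^C)%VS = 1%N.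
  have dUn : (\dim U <= n)%N by apply: ltnW; rewrite dimU.
  rewrite dimv_compl dimvf /dim /= mul1n.
  by apply/eqP; rewrite -(eqn_add2r (\dim U)) subnK // add1n dimU.
have e0nz : e0 != 0.
  by rewrite vpick0 -dimv_eq0 dimC.
have Ce0 : (U^C)%VS = <[e0]>%VS.
  apply/eqP; rewrite eq_sym eqEdim dim_vline e0nz dimC leqnn andbT.
  by rewrite -memvE memv_pick.
pose g := fun v : 'rV[R]_n => \row_(i < 3)
  (if (val i == 0)%N then t v else if (val i == 1)%N then w x v else w v e0).
have lg : linear g.
  move=> a u v; apply/rowP => i; rewrite !mxE.
  case: ifP => _; first by rewrite tl.
  by case: ifP => _; rewrite ?wr ?wl.
have [G GE] := @exists_lin _ _ _ g lg.
pose F := linfun G.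
have FE v : F v = g v by rewrite lfunE GE.
have hd := limg_ker_dim F U.
have him : (\dim (F @: U) <= 3)%N.
  by have := dimvS (subvf (F @: U)); rewrite dimvf /dim /= mul1n.
set K := (U :&: lker F)%VS.
have Knz : K != 0%VS.
  rewrite -dimv_eq0; apply/eqP => h; move: hd; rewrite h add0n => hd.
  have h6 : (5 <= \dim U)%N by rewrite -ltnS dimU.
  move: him; rewrite hd => h3; by have := leq_trans h6 h3.
set u := vpick K.
have unz : u != 0 by rewrite vpick0.
have uK : u \in K := memv_pick K.
move: uK; rewrite memv_cap memv_ker => /andP [uU /eqP Fu].
have comp (i : 'I_3) : (g u) 0 i = 0 by rewrite -FE Fu mxE.
have tu : t u = 0 by have := comp (Ordinal (isT : (0 < 3)%N)); rewrite mxE.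
have wxu : w x u = 0 by have := comp (Ordinal (isT : (1 < 3)%N)); rewrite mxE.
have wue : w u e0 = 0 by have := comp (Ordinal (isT : (2 < 3)%N)); rewrite mxE.
have wuU a : a \in U -> w u a = 0.
  move=> aU; have := main u a uU aU.
  rewrite tu wxu !mul0r mulr0 subr0 addr0 => /eqP; rewrite mulf_eq0.
  by rewrite (negbTE tx0) => /eqP.
move: unz; suff -> : u = 0 by rewrite eqxx.
apply: wnd => z.
have : z \in (U + (U^C)%VS)%VS by rewrite addv_complf memvf.
move=> /memv_addP [a aU [b]]; rewrite Ce0 => /vlineP [k ->] ->.
by rewrite addrC wr wue mulr0 add0r wuU.
Qed.
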